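(* Let $i,j\in I$, $c_1:=-\langle h_i,\alpha_j\rangle$, $c_2:=-\langle h_j,\alpha_i\rangle$, and suppose $c_1c_2=2$. Define $\phi^{(2)}_{ij}:B_i\otimes B_j\otimes B_i\otimes B_j\to B_j\otimes B_i\otimes B_j\otimes B_i$ by $\phi^{(2)}_{ij}((x)_i\otimes(y)_j\otimes(z)_i\otimes(w)_j)=(X)_j\otimes(Y)_i\otimes(Z)_j\otimes(W)_i$, where $$X=w+(-c_2x+y-w+c_2(x-c_1y+z)_+)_+,\qquad Y=x+c_1w+(-x+z-c_1w+(x-c_1y+z)_+)_+,$$ $$Z=y-(-c_2x+y-w+c_2(x-c_1y+z)_+)_+,\qquad W=z-c_1w-(-x+z-c_1w+(x-c_1y+z)_+)_+.$$ Then $\phi^{(2)}_{ij}$ is an isomorphism of crystals.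
   Context: Let $\mathfrak g$ be a symmetrizable Kac–Moody algebra with finite index set $I$, weight lattice $P$, simple roots $\alpha_i$ and simple coroots $h_i$ ($i\in I$), with pairing $\langle\cdot,\cdot\rangle$. A crystal is a set $B$ with maps $wt:B\to P$, $\varepsilon_i,\varphi_i:B\to\mathbb Z\sqcup\{-\infty\}$, $\tilde e_i,\tilde f_i:B\sqcup\{0\}\to B\sqcup\{0\}$ ($i\in I$) such that $\varphi_i(b)=\varepsilon_i(b)+\langle h_i,wt(b)\rangle$; $wt(\tilde e_ib)=wt(b)+\alpha_i$ if $\tilde e_ib\in B$; $wt(\tilde f_ib)=wt(b)-\alpha_i$ if $\tilde f_ib\in B$; $\tilde e_ib_2=b_1\iff\tilde f_ib_1=b_2$; $\varepsilon_i(b)=-\infty$ implies $\tilde e_ib=\tilde f_ib=0$; $\tilde e_i0=\tilde f_i0=0$. A strict morphism $\psi:B_1\to B_2$ is a map $B_1\sqcup\{0\}\to B_2\sqcup\{0\}$ with $\psi(0)=0$, preserving $wt,\varepsilon_i,\varphi_i$ on elements $b$ with $\psi(b)\neq0$, and commuting with all $\tilde e_i,\tilde f_i$; an isomorphism of crystals is a bijective strict morphism. The tensor product $B_1\otimes B_2=\{b_1\otimes b_2\}$ has $wt(b_1\otimes b_2)=wt(b_1)+wt(b_2)$, $\varepsilon_i(b_1\otimes b_2)=\max(\varepsilon_i(b_1),\varepsilon_i(b_2)-\langle h_i,wt(b_1)\rangle)$, $\varphi_i(b_1\otimes b_2)=\max(\varphi_i(b_2),\varphi_i(b_1)+\langle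 h_i,wt(b_2)\rangle)$, $\tilde e_i(b_1\otimes b_2)=\tilde e_ib_1\otimes b_2$ if $\varphi_i(b_1)\ge\varepsilon_i(b_2)$ and $b_1\otimes\tilde e_ib_2$ otherwise, $\tilde f_i(b_1\otimes b_2)=\tilde f_ib_1\otimes b_2$ if $\varphi_i(b_1)>\varepsilon_i(b_2)$ and $b_1\otimes\tilde f_ib_2$ otherwise (with $b\otimes0=0\otimes b=0$); it is associative. For $i\in I$, $B_i=\{(x)_i: x\in\mathbb Z\}$ is the crystal with $wt((x)_i)=x\alpha_i$, $\varepsilon_i((x)_i)=-x$, $\varphi_i((x)_i)=x$, $\varepsilon_j((x)_i)=\varphi_j((x)_i)=-\infty$ for $j\ne i$, $\tilde e_j(x)_i=\delta_{ij}(x+1)_i$, $\tilde f_j(x)_i=\delta_{ij}(x-1)_i$ (where $\delta_{ij}\cdot(\ )=0$ for $j\neq i$). For $x\in\mathbb Q$, $x_+:=\max(x,0)$. *)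

(* Defs.v *)
From HB Require Import structures.
From mathcomp Require Import all_boot all_order all_algebra.
Set Implicit Arguments. Unset Strict Implicit. Unset Printing Implicit Defensive.
Import Order.TTheory GRing.Theory Num.Theory.
Local Open Scope ring_scope.

(* Z ⊔ {-oo}: None stands for -oo. *)
Definition ext := option int.
Definition emax (a b : ext) : ext :=
  match a, b with
  | None, _ => b | _, None => a
  | Some x, Some y => Some (Num.max x y) end.
Definition eaddz (a : ext) (z : int) : ext := omap (fun x => x + z) a.
Definition ege (a b : ext) : bool :=
  match a, b with
  | _, None => true | None, Some _ => false
  | Some x, Some y => y <= x end.
Definition egt (a b : ext) : bool :=
  match a, b with
  | None, _ => false | Some _, None => true
  | Some x, Some y => y < x end.

Section Crystals.
Variables (I : finType) (P : zmodType).
(* alpha k = simple root alpha_k ; h k = the functional <h_k, . > on P *)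
Variables (alpha : I -> P) (h : I -> P -> int).

Definition symmetrizable_KM_data : Prop :=
  (forall k x y, h k (x + y) = h k x + h k y) /\
  [/\ (forall c : I -> int, \sum_k (alpha k) *~ (c k) = 0 -> forall k, c k = 0),
      (forall k, h k (alpha k) = 2),
      (forall k l, k != l -> h k (alpha l) <= 0),
      (forall k l, h k (alpha l) = 0 -> h l (alpha k) = 0)
    & exists d : I -> int, (forall k, 0 < d k) /\
        forall k l, d k * h k (alpha l) = d l * h l (alpha k)].

(* Crystal data: wt, eps_k, phi_k, e~_k, f~_k ; the value 0 is None. *)
Record crystal := Crystal {
  carrier : Type;
  wt : carrier -> P;
  eps : I -> carrier -> ext;
  phi : I -> carrier -> ext;
  ce : I -> carrier -> option carrier;
  cf : I -> carrier -> option carrier }.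

Definition tensor (B1 B2 : crystal) : crystal :=
  @Crystal (carrier B1 * carrier B2)
    (fun b => wt b.1 + wt b.2)
    (fun k b => emax (eps k b.1) (eaddz (eps k b.2) (- h k (wt b.1))))
    (fun k b => emax (phi k b.2) (eaddz (phi k b.1) (h k (wt b.2))))
    (fun k b => if ege (phi k b.1) (eps k b.2)
                then omap (fun x => (x, b.2)) (ce k b.1)
                else omap (fun y => (b.1, y)) (ce k b.2))
    (fun k b => if egt (phi k b.1) (eps k b.2)
                then omap (fun x => (x, b.2)) (cf k b.1)
                else omap (fun y => (b.1, y)) (cf k b.2)).

(* The crystal B_i = {(x)_i : x in Z}; (x)_i is represented by x. *)
Definition Bcr (i : I) : crystal :=
  @Crystal int
    (fun x => alpha i *~ x)
    (fun k x => if k == i then Some (- x) else None)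
    (fun k x => if k == i then Some x else None)
    (fun k x => if k == i then Some (x + 1) else None)
    (fun k x => if k == i then Some (x - 1) else None).

(* strict morphisms: maps B1 ⊔ {0} -> B2 ⊔ {0} *)
Definition strict_morphism (B1 B2 : crystal)
    (psi : option (carrier B1) -> option (carrier B2)) : Prop :=
  [/\ psi None = None,
      (forall b b', psi (Some b) = Some b' ->
         wt b' = wt b /\ forall k, eps k b' = eps k b /\ phi k b' = phi k b)
    & (forall k ob, psi (obind (ce k) ob) = obind (ce k) (psi ob) /\
                    psi (obind (cf k) ob) = obind (cf k) (psi ob))].

Definition crystal_iso (B1 B2 : crystal)
    (psi : option (carrier B1) -> option (carrier B2)) : Prop :=
  strict_morphism psi /\ bijective psi.

Definition pos (x : int) : int := Num.max x 0.

(* phi^(2)_{ij} on elements, with c1 = -<h_i,alpha_j>, c2 = -<h_j,alpha_i>;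
   tensor products are associated to the left: ((b1 ⊗ b2) ⊗ b3) ⊗ b4. *)
Definition phi2_map (c1 c2 : int) (b : ((int * int) * int) * int)
    : ((int * int) * int) * int :=
  let: (x, y, z, w) := b in
  let A := pos (- (c2 * x) + y - w + c2 * pos (x - c1 * y + z)) in
  let C := pos (- x + z - c1 * w + pos (x - c1 * y + z)) in
  (w + A, x + c1 * w + C, y - A, z - c1 * w - C).

Definition BiBjBiBj (i j : I) : crystal :=
  tensor (tensor (tensor (Bcr i) (Bcr j)) (Bcr i)) (Bcr j).

End Crystals.

(* Main.v *)
Require Import Defs.
From HB Require Import structures.
From mathcomp Require Import all_boot all_order all_algebra zify.
Import Order.TTheory GRing.Theory Num.Theory.
Local Open Scope ring_scope.

Lemma hZ (I : finType) (P : zmodType) (h : I -> P -> int)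
  (hadd : forall k x y, h k (x + y) = h k x + h k y) k (a : P) (n : int) :
  h k (a *~ n) = h k a * n.
Proof.
have h0 : h k 0 = 0 by have := hadd k 0 0; rewrite addr0; lia.
have hN : forall x, h k (- x) = - h k x.
  by move=> x; have := hadd k x (- x); rewrite subrr h0; lia.
have hn : forall m : nat, h k (a *+ m) = h k a * m%:Z.
  elim=> [|m IH]; first by rewrite mulr0n h0 mulr0.
  by rewrite mulrS hadd IH; lia.
case: n => m; first by rewrite -pmulrn hn.
by rewrite NegzE mulrNz hN -pmulrn hn; lia.
Qed.

Lemma collapse (P : zmodType) (a b : P) (p q r s : int) :
  a *~ p + b *~ q + a *~ r + b *~ s = a *~ (p + r) + b *~ (q + s).
Proof. by rewrite -addrA addrACA !mulrzDr. Qed.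

Theorem proposition4p1 (I : finType) (P : zmodType) (alpha : I -> P)
    (h : I -> P -> int) (HKM : symmetrizable_KM_data alpha h)
    (i j : I) (c1 c2 : int)
    (Hc1 : c1 = - h i (alpha j)) (Hc2 : c2 = - h j (alpha i))
    (Hc : c1 * c2 = 2) :
  @crystal_iso I P (BiBjBiBj alpha h i j) (BiBjBiBj alpha h j i)
    (omap (phi2_map c1 c2)).
Proof.
case: HKM => hadd [_ hii hneg _ _].
have ij : i != j.
  by apply/eqP=> E; move: Hc1 Hc2 Hc; rewrite E hii => -> ->.
have ji : j != i by rewrite eq_sym.
have c1p : 0 <= c1 by rewrite Hc1 oppr_ge0 hneg.
have c2p : 0 <= c2 by rewrite Hc2 oppr_ge0 hneg.
have hij : h i (alpha j) = - c1 by rewrite Hc1 opprK.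
have hji : h j (alpha i) = - c2 by rewrite Hc2 opprK.
have hjj := hii j; have {}hii := hii i.
have cc : (c1 = 1 /\ c2 = 2) \/ (c1 = 2 /\ c2 = 1).
  have c2q : 0 < c2 by move: Hc; case: (c2 =P 0) => [->|]; [rewrite mulr0|]; lia.
  have c1q : 0 < c1 by move: Hc; case: (c1 =P 0) => [->|]; [rewrite mul0r|]; lia.
  have c1l : c1 <= 2 by nia.
  have c2l : c2 <= 2 by nia.
  have : c1 = 1 \/ c1 = 2 by lia.
  case=> E; move: Hc; rewrite E; lia.
split; last first.
  exists (omap (phi2_map c2 c1)) => [[[[[x y] z] w]|]|[[[[x y] z] w]|]] //=;
    congr Some; rewrite /phi2_map /pos;
    (case: cc => [[-> ->]|[-> ->]]; congr (_,_,_,_)).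
  all: try lia.
clear Hc1 Hc2 hneg Hc.
have hZ' := @hZ I P h hadd.
split => //.
- move=> [[[x y] z] w] b' [<-]; rewrite /phi2_map /=.
  split.
    rewrite !collapse addrC; congr (_ + _); congr (_ *~ _); lia.
  move=> k; rewrite !hadd !hZ'.
  case: (eqVneq k i) => [->|ki]; last case: (eqVneq k j) => [->|kj].
  + rewrite ?hii ?hij ?hji ?hjj ?(negbTE ij) ?(negbTE ji) /=.
    split; congr Some; case: cc => [[-> ->]|[-> ->]]; rewrite /pos; lia.
  + rewrite ?hii ?hij ?hji ?hjj ?(negbTE ij) ?(negbTE ji) /=.
    split; congr Some; case: cc => [[-> ->]|[-> ->]]; rewrite /pos; lia.
  + rewrite ?(negbTE ki) ?(negbTE kj) /=; done.
- move=> k [[[[x y] z] w]|] //=.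
  case: (eqVneq k i) => [->|ki]; last case: (eqVneq k j) => [->|kj].
  + rewrite !hZ' ?hii ?hij ?(negbTE ij) ?(negbTE ji) /=.
    case: cc => [[-> ->]|[-> ->]]; rewrite /pos; split;
    repeat (case: ifP => ?); rewrite /= /phi2_map /pos /=;
    congr Some; congr (_,_,_,_); lia.
  + rewrite !hZ' ?hji ?hjj ?(negbTE ij) ?(negbTE ji) /=.
    case: cc => [[-> ->]|[-> ->]]; rewrite /pos; split;
    repeat (case: ifP => ?); rewrite /= /phi2_map /pos /=;
    congr Some; congr (_,_,_,_); lia.
  + by rewrite /= ?(negbTE ki) ?(negbTE kj) /=.
Qed.
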